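(* A topological space is an MG-space if and only if it is a quotient space of some locally Menger space.
   Context: A space $X$ is Menger if for each sequence $(\mathcal{U}_n)$ of open covers of $X$ there is a sequence $(\mathcal{V}_n)$ with each $\mathcal{V}_n$ a finite subset of $\mathcal{U}_n$ and $\bigcup_{n}\bigcup\mathcal{V}_n=X$. A space $X$ is locally Menger if for each $x\in X$ there exist an open set $U$ and a Menger subspace $Y$ of $X$ with $x\in U\subseteq Y$. A space $X$ is Menger generated (an MG-space) if a subset $U\subseteq X$ is open in $X$ whenever $U\cap M$ is open in $M$ for every Menger subspace $M$ of $X$. *)

(* Defs.v *)
From HB Require Import structures.
From mathcomp Require Import all_boot all_order.
From mathcomp Require Import all_classical topology.
Set Implicit Arguments. Unset Strict Implicit. Unset Printing Implicit Defensive.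
Local Open Scope classical_set_scope.

Definition relopen (X : topologicalType) (A V : set X) : Prop :=
  exists W : set X, open W /\ V = W `&` A.

Definition open_cover_of (X : topologicalType) (A : set X) (U : set (set X)) : Prop :=
  (forall V, U V -> relopen A V) /\ \bigcup_(V in U) V = A.

Definition Menger_subspace (X : topologicalType) (A : set X) : Prop :=
  forall U : nat -> set (set X), (forall n, open_cover_of A (U n)) ->
  exists V : nat -> set (set X),
    (forall n, finite_set (V n) /\ V n `<=` U n) /\
    \bigcup_n \bigcup_(W in V n) W = A.

Definition Menger (X : topologicalType) : Prop := Menger_subspace (@setT X).

Definition locally_Menger (X : topologicalType) : Prop :=
  forall x : X, exists (U Y : set X), open U /\ Menger_subspace Y /\ U x /\ U `<=` Y.

Definition MG_space (X : topologicalType) : Prop :=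
  forall U : set X,
    (forall M : set X, Menger_subspace M -> relopen M (U `&` M)) -> open U.

Definition quotient_map (Y X : topologicalType) (f : Y -> X) : Prop :=
  (forall x : X, exists y : Y, f y = x) /\
  (forall U : set X, open U <-> open (f @^-1` U)).

(* Main.v *)
Require Import Defs.
From HB Require Import structures.
From mathcomp Require Import all_boot all_classical topology.
Set Implicit Arguments. Unset Strict Implicit. Unset Printing Implicit Defensive.
Local Open Scope classical_set_scope.

Lemma menger_image (Y X : topologicalType) (g : Y -> X) (A : set Y) :
  Menger_subspace A ->
  (forall O : set X, open O -> relopen A (g @^-1` O `&` A)) ->
  Menger_subspace (g @` A).
Proof.
move=> mA hg U hU.
pose U' n := [set (g @^-1` V) `&` A | V in U n].
have hU' : forall n, open_cover_of A (U' n).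
  move=> n; have [hr hc] := hU n; split.
  - move=> _ [V UV <-]; have [O [oO eO]] := hr V UV.
    have -> : g @^-1` V `&` A = g @^-1` O `&` A.
      apply/seteqP; split => a /= [ga Aa]; split => //.
      + have : (O `&` g @` A) (g a) by rewrite -eO.
        by case.
      + by rewrite eO; split => //; exists a.
    exact: hg.
  - apply/seteqP; split => a.
    + by move=> [_ [V _ <-]] [].
    + move=> Aa; have : (g @` A) (g a) by exists a.
      rewrite -hc => -[V UV Vga]; exists (g @^-1` V `&` A) => //; by exists V.
have [V'' [hf hc]] := mA U' hU'.
exists (fun n => [set g @` S | S in V'' n]); split.
- move=> n; split; first exact: finite_image (hf n).1.
  move=> _ [S VS <-]; have [V UV <-] := (hf n).2 S VS.
  have sV : V `<=` g @` A by have [_ <-] := hU n => x Vx; exists V.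
  suff -> : g @` (g @^-1` V `&` A) = V by [].
  apply/seteqP; split => x.
  + by move=> [a [Va _] <-].
  + by move=> /[dup] /sV [a Aa <-] Vga; exists a.
- apply/seteqP; split => x.
  + move=> [n _ [_ [S VS <-] [s Ss <-]]]; exists s => //.
    by rewrite -hc; exists n => //; exists S.
  + move=> [a Aa <-]; move: Aa; rewrite -hc => -[n _ [S VS Sa]].
    by exists n => //; exists (g @` S); [exists S | exists a].
Qed.

Lemma menger_set1 (X : topologicalType) (x : X) : Menger_subspace [set x].
Proof.
move=> U hU; have [_ hc] := hU 0%N.
have : (\bigcup_(V in U 0%N) V) x by rewrite hc.
case=> V UV Vx.
have sV : V `<=` [set x] by rewrite -hc => y Vy; exists V.
exists (fun n => if n is 0%N then [set V] else set0); split.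
- case=> [|n]; split => /=.
  + exact: finite_set1.
  + by move=> W ->.
  + exact: finite_set0.
  + by move=> W.
- apply/seteqP; split => y.
  + move=> [[|n] _ [W /= hW Wy]] //.
    by move: Wy; rewrite hW; move/sV.
  + by move=> ->; exists 0%N => //; exists V.
Qed.

Lemma open_local (Y : topologicalType) (A : set Y) :
  (forall y, A y -> exists B, open B /\ B y /\ B `<=` A) -> open A.
Proof.
move=> h; rewrite openE => y Ay; have [B [oB [By sB]]] := h y Ay.
by rewrite /interior /=; rewrite nbhsE; exists B.
Qed.
Section Y.
Variable X : topologicalType.
Definition MGY : Type := (set X * X)%type.
HB.instance Definition _ := Choice.on MGY.
Definition mgy_open (W : set MGY) : Prop :=
  forall M : set X, Menger_subspace M -> exists O : set X, open O /\
     [set x | W (M, x)] `&` M = O `&` M.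
Lemma mgy_openT : mgy_open setT.
Proof. by move=> M _; exists setT; split => //; exact: openT. Qed.
Lemma mgy_openI : setI_closed mgy_open.
Proof.
move=> A B hA hB M mM; have [O1 [o1 e1]] := hA M mM; have [O2 [o2 e2]] := hB M mM.
exists (O1 `&` O2); split; first exact: openI.
apply/seteqP; split => x /=.
- move=> [[a b] m]; have : ([set x | A (M, x)] `&` M) x by [].
  have : ([set x | B (M, x)] `&` M) x by [].
  rewrite e1 e2 => -[? _] [? _]; done.
- move=> [[a b] m]; have : (O1 `&` M) x by [].
  have : (O2 `&` M) x by [].
  rewrite -e1 -e2 => -[? _] [? _]; done.
Qed.
Lemma mgy_open_bigU (I : Type) (f : I -> set MGY) : (forall i, mgy_open (f i)) ->
    mgy_open (\bigcup_i f i).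
Proof.
move=> hf M mM.
have [g hg] := @choice _ _ (fun i O => open O /\ [set x | f i (M, x)] `&` M = O `&` M)
  (fun i => hf i M mM).
exists (\bigcup_i g i); split; first by apply: bigcup_open => i _; case: (hg i).
apply/seteqP; split => x /=.
- move=> [[i _ h] m]; have : ([set x | f i (M, x)] `&` M) x by [].
  case: (hg i) => _ ->; case=> ? _; split => //; by exists i.
- move=> [[i _ h] m]; have : (g i `&` M) x by [].
  case: (hg i) => _ <-; case=> ? _; split => //; by exists i.
Qed.
HB.instance Definition _ := isOpenTopological.Build MGY mgy_openT mgy_openI mgy_open_bigU.
Lemma mgy_openE (W : set MGY) : open W <-> mgy_open W.
Proof. by []. Qed.
End Y.

Theorem theorem4p12 (X : topologicalType) :
  MG_space X <->
  exists (Y : topologicalType) (f : Y -> X), locally_Menger Y /\ quotient_map f.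
Proof.
split.
- move=> hMG; exists (MGY X), snd; split.
  + move=> [M x].
    pose h := fun z : X => ((M, z) : MGY X).
    have hfib : forall (S : set X) M' z, (h @` S) (M', z) -> M' = M /\ S z.
      by move=> S M' z [a Sa [<- <-]].
    have hfib2 : forall (S : set X) z, S z -> (h @` S) (M, z).
      by move=> S z Sz; exists z.
    case: (pselect (Menger_subspace M /\ M x)) => [[mM Mx]|nM].
    * exists (h @` M), (h @` M); split; last split; last split => //.
      -- apply/mgy_openE => M' mM'.
         case: (pselect (M' = M)) => [->|neM].
         ++ exists setT; split; first exact: openT.
            apply/seteqP; split => z [A B]; split => //.
            by apply: hfib2.
         ++ exists set0; split; first exact: open0.
            apply/seteqP; split => z [A B] //.
            by have [] := hfib _ _ _ A.
      -- apply: menger_image => // O /mgy_openE oO.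
         have [O' [oO' eO]] := oO M mM.
         by exists O'.
      -- exact: hfib2.
    * exists (h @` [set x]), (h @` [set x]); split; last split; last split => //.
      -- apply/mgy_openE => M' mM'.
         exists set0; split; first exact: open0.
         apply/seteqP; split => z [A B] //.
         have [eM ezx] := hfib _ _ _ A.
         exfalso; apply: nM; split; first by rewrite -eM.
         by rewrite -eM -ezx.
      -- apply: menger_image; first exact: menger_set1.
         move=> O _.
         case: (pselect (O (M, x))) => Ox.
         ++ exists setT; split; first exact: openT.
            by apply/seteqP; split => z [A B] //; split => //; rewrite /= B.
         ++ exists set0; split; first exact: open0.
            by apply/seteqP; split => z [A B] //; exfalso; apply: Ox; move: A; rewrite /= B.
      -- exact: hfib2.
  + split; first by move=> x; exists (set0, x).
    move=> U; split => hU.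
    * by apply/mgy_openE => M _; exists U.
    * apply: hMG => M mM.
      have [O [oO eO]] := (hU : mgy_open _) M mM.
      by exists O.
- move=> [Y [f [hloc [hsurj hq]]]] U hU.
  apply/hq/open_local => y Uy.
  have [N [Z [oN [mZ [Ny sNZ]]]]] := hloc y.
  have mfZ : Menger_subspace (f @` Z).
    apply: menger_image => // O oO.
    by exists (f @^-1` O); split => //; apply/hq.
  have [O [oO eO]] := hU _ mfZ.
  exists (N `&` f @^-1` O); split; first by apply: openI => //; apply/hq.
  split.
  + split => //.
    have : (U `&` f @` Z) (f y) by split => //; exists y => //; apply: sNZ.
    by rewrite eO => -[].
  + move=> z [Nz Oz].
    have : (O `&` f @` Z) (f z) by split => //; exists z => //; apply: sNZ.
    by rewrite -eO => -[].
Qed.
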